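(* Let $G$ be a connected triangle-free plane graph and let $f_0$ be the unbounded face of $G$. Assume that the boundary of $f_0$ is a cycle $C$ of length at most six, and that every vertex of $G$ not on $C$ has degree at least three. If $G\neq C$, then $G$ has either a tetragram, or a pentagram $(v_1,v_2,v_3,v_4,v_5)$ such that $v_1,v_2,v_3,v_4\notin V(C)$.
   Context: All graphs are finite and simple; a plane graph is a graph drawn in the plane without crossings. A cycle $F$ of a plane graph $G$ is called facial if it bounds a face of some connected component of $G$ (regardless of whether other components lie inside it). A tetragram in $G$ is a sequence $(v_1,v_2,v_3,v_4)$ of vertices forming a facial cycle in the order listed. A pentagram in $G$ is a sequence $(v_1,\dots,v_5)$ of vertices forming a facial cycle in the order listed such that $v_1,v_2,v_3,v_4$ all have degree exactly three in $G$. *)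

(* Defs.v *)
(* Plane graphs are encoded combinatorially as rotation
   systems (combinatorial maps) of genus 0. *)
From mathcomp Require Import all_boot.
Set Implicit Arguments. Unset Strict Implicit. Unset Printing Implicit Defensive.

Section PlaneMap.
Variables (V D : finType) (tl : D -> V) (a s : D -> D).
(* darts D; tl d = tail vertex of dart d; a = edge involution (reverse dart);
   s = rotation of darts around their tail vertex. *)

(* face permutation: follow dart d to its head, then rotate there *)
Definition phi (d : D) : D := s (a d).

Definition adj : rel V := fun u v => [exists d, (tl d == u) && (tl (a d) == v)].

Definition deg (v : V) : nat := #|[set d | tl d == v]|.

Definition connected_graph : Prop := forall u v, connect adj u v.

Definition triangle_free : Prop :=
  forall x y z, adj x y -> adj y z -> adj z x -> False.

Definition nfaces : nat := fcard phi D.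

Definition plane_map : Prop :=
  (forall d, a (a d) = d) /\
  (forall d, a d != d) /\
  injective s /\
  (forall d, tl (s d) = tl d) /\
  (forall d d', tl d = tl d' -> fconnect s d d') /\
  (forall d, tl (a d) != tl d) /\
  (forall d d', tl d = tl d' -> tl (a d) = tl (a d') -> d = d') /\
  2 * (#|V| + nfaces) = #|D| + 4 (* Euler's formula: genus 0 *).

Definition face_walk (d : D) (n : nat) : seq V := map tl (traject phi d n).

(* vs forms a facial cycle, in the order listed (either orientation,
   any starting point) *)
Definition facial_cycle (vs : seq V) : Prop :=
  exists d, [/\ order phi d = size vs, 2 < size vs, uniq vs &
    (face_walk d (size vs) = vs \/ rev (face_walk d (size vs)) = vs)].

Definition tetragram (v1 v2 v3 v4 : V) : Prop := facial_cycle [:: v1; v2; v3; v4].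

Definition pentagram (v1 v2 v3 v4 v5 : V) : Prop :=
  facial_cycle [:: v1; v2; v3; v4; v5] /\
  [/\ deg v1 = 3, deg v2 = 3, deg v3 = 3 & deg v4 = 3].

(* the face f0 (outer face) is the phi-orbit of d0; its boundary vertex
   sequence: *)
Definition outer_walk (d0 : D) : seq V := face_walk d0 (order phi d0).

Definition differs_from_face (d0 : D) : Prop :=
  (exists v, v \notin outer_walk d0) \/
  (exists d, d \notin orbit phi d0 /\ a d \notin orbit phi d0).

End PlaneMap.

(* Main.v *)
Require Import Defs.
From mathcomp Require Import all_boot zify.
From Stdlib Require Import Lia Classical_Prop.
Set Implicit Arguments. Unset Strict Implicit. Unset Printing Implicit Defensive.


Section Basic.
Variables (V D : finType) (tl : D -> V) (a s : D -> D).
Hypothesis hpm : plane_map tl a s.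

Local Notation ph := (phi a s).
Local Notation dg := (deg tl).

Lemma aK : involutive a. Proof. by case: hpm. Qed.
Lemma a_neq d : a d != d. Proof. by case: hpm => _ []. Qed.
Lemma s_inj : injective s. Proof. by case: hpm => _ [] _ []. Qed.
Lemma tl_s d : tl (s d) = tl d. Proof. by case: hpm => _ [] _ [] _ []. Qed.
Lemma tl_con d d' : tl d = tl d' -> fconnect s d d'.
Proof. by case: hpm => _ [] _ [] _ [] _ [] H _; apply: H. Qed.
Lemma noloop d : tl (a d) != tl d. Proof. by case: hpm => _ [] _ [] _ [] _ [] _ [] H _. Qed.
Lemma nomulti d d' : tl d = tl d' -> tl (a d) = tl (a d') -> d = d'.
Proof. by case: hpm => _ [] _ [] _ [] _ [] _ [] _ [] H _; apply: H. Qed.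
Lemma euler : 2 * (#|V| + nfaces a s) = #|D| + 4.
Proof. by case: hpm => _ [] _ [] _ [] _ [] _ [] _ [] _ H. Qed.

Lemma a_inj : injective a. Proof. exact: (can_inj aK). Qed.
Lemma ph_inj : injective ph.
Proof. by move=> x y; rewrite /phi => /s_inj /a_inj. Qed.
Lemma tl_ph d : tl (ph d) = tl (a d). Proof. by rewrite /phi tl_s. Qed.
Lemma tl_iter_s k d : tl (iter k s d) = tl d.
Proof. by elim: k => //= k IH; rewrite tl_s. Qed.

Lemma degE v : dg v = #|[pred d | tl d == v]|.
Proof. by rewrite /deg cardsE. Qed.

Lemma fix_deg1 x : s x = x -> dg (tl x) = 1.
Proof.
move=> sx; rewrite degE -(card1 x); apply: eq_card => d /=.
rewrite inE; apply/eqP/eqP => [e|->//].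
have /iter_findex <- := tl_con (esym e).
by elim: (findex _ _ _) => //= k ->.
Qed.

Lemma adj_dart d : adj tl a (tl d) (tl (a d)).
Proof. by apply/existsP; exists d; rewrite !eqxx. Qed.

Lemma adj_sym x y : adj tl a x y -> adj tl a y x.
Proof.
case/existsP=> d /andP[/eqP <- /eqP <-]; apply/existsP; exists (a d).
by rewrite aK !eqxx.
Qed.

Lemma adj_neq x y : adj tl a x y -> x != y.
Proof. by case/existsP=> d /andP[/eqP <- /eqP <-]; rewrite eq_sym noloop. Qed.

End Basic.


Section Faces.
Variables (V D : finType) (tl : D -> V) (a s : D -> D).
Hypothesis hpm : plane_map tl a s.
Hypothesis hdeg : forall v, 2 <= deg tl v.
Hypothesis htf : triangle_free tl a.

Local Notation ph := (phi a s).
Local Notation dg := (deg tl).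

Lemma nobt d : ph d != a d.
Proof.
apply/eqP => e; have := hdeg (tl (a d)); rewrite (fix_deg1 hpm e) //.
Qed.

Lemma dist1 d : tl (ph d) != tl d.
Proof. by rewrite (tl_ph hpm) (noloop hpm). Qed.

Lemma dist2 d : tl (ph (ph d)) != tl d.
Proof.
apply/eqP => e; have /eqP := nobt d; apply.
apply: (nomulti hpm); first by rewrite (tl_ph hpm).
by rewrite (aK hpm) -e (tl_ph hpm).
Qed.

Lemma dist3 d : tl (ph (ph (ph d))) != tl d.
Proof.
apply/eqP => e.
apply: (htf (x := tl d) (y := tl (ph d)) (z := tl (ph (ph d)))).
- by rewrite (tl_ph hpm); apply: adj_dart.
- by rewrite [X in adj _ _ _ X](tl_ph hpm); apply: adj_dart.
- by rewrite -[X in adj _ _ _ X]e [X in adj _ _ _ X](tl_ph hpm); apply: adj_dart.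
Qed.

Lemma iter_ph_order x : iter (order ph x) ph x = x.
Proof. exact: (iter_order (ph_inj hpm)). Qed.

Lemma order_iter j x : order ph (iter j ph x) = order ph x.
Proof.
rewrite /order; apply: eq_card => y.
have cx : fconnect ph x (iter j ph x) by apply: fconnect_iter.
apply/idP/idP => H.
- exact: connect_trans cx H.
- rewrite (fconnect_sym (ph_inj hpm)) in cx.
  exact: connect_trans cx H.
Qed.

Lemma order_ge4 x : 4 <= order ph x.
Proof.
have := iter_ph_order x; have := order_gt0 ph x.
case: (order ph x) => [|[|[|[|k]]]] //= _ e.
- by have := dist1 x; rewrite e eqxx.
- by have := dist2 x; rewrite e eqxx.
- by have := dist3 x; rewrite e eqxx.
Qed.

Lemma face4 x : order ph x = 4 ->
  tetragram tl a s (tl x) (tl (ph x)) (tl (ph (ph x))) (tl (ph (ph (ph x)))).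
Proof.
move=> o4; exists x; rewrite o4; split => //; last by left.
have e : ph (ph (ph (ph x))) = x by have := iter_ph_order x; rewrite o4.
have n1 := dist1; have n2 := dist2; have n3 := dist3.
rewrite /= !inE !negb_or -!andbA.
by repeat (apply/andP; split) => //; rewrite eq_sym;
  first [apply: n1 | apply: n2 | apply: n3].
Qed.

Lemma face5 x : order ph x = 5 ->
  facial_cycle tl a s [:: tl x; tl (ph x); tl (ph (ph x)); tl (ph (ph (ph x)));
                        tl (ph (ph (ph (ph x))))].
Proof.
move=> o5; exists x; rewrite o5; split => //; last by left.
have e : ph (ph (ph (ph (ph x)))) = x by have := iter_ph_order x; rewrite o5.
have n1 := dist1; have n2 := dist2; have n3 := dist3.
have n4 : tl (ph (ph (ph (ph x)))) != tl x.
  by rewrite eq_sym -{1}e n1.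
rewrite /= !inE !negb_or -!andbA.
by repeat (apply/andP; split) => //; rewrite eq_sym;
  first [apply: n1 | apply: n2 | apply: n3 | apply: n4].
Qed.

End Faces.


Section Outer.
Variables (V D : finType) (tl : D -> V) (a s : D -> D) (d0 : D).
Hypothesis hpm : plane_map tl a s.

Local Notation ph := (phi a s).
Local Notation dg := (deg tl).
Local Notation n := (order ph d0).
Local Notation C := (outer_walk tl a s d0).

Hypothesis hn : 3 <= n.
Hypothesis huniq : uniq C.

Definition o k := iter k ph d0.
Definition c k := tl (o k).

Lemma o_mul q : iter (q * n) ph d0 = d0.
Proof.
elim: q => [|q IH]; first by rewrite mul0n.
rewrite mulSn iterD IH.
exact: (iter_ph_order hpm).
Qed.

Lemma o_mod k : o k = o (k %% n).
Proof. by rewrite /o {1}(divn_eq k n) addnC iterD o_mul. Qed.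

Lemma o_add k : o (k + n) = o k.
Proof. by rewrite o_mod modnDr -o_mod. Qed.

Lemma c_add k : c (k + n) = c k.
Proof. by rewrite /c o_add. Qed.

Lemma o_S k : ph (o k) = o k.+1.
Proof. by []. Qed.

Lemma size_C : size C = n.
Proof. by rewrite /outer_walk /face_walk size_map size_traject. Qed.

Lemma nth_C k : k < n -> nth (tl d0) C k = c k.
Proof.
move=> kn; rewrite /outer_walk /face_walk (nth_map d0) ?size_traject //.
by rewrite nth_traject.
Qed.

Lemma memC v : reflect (exists2 k, k < n & v = c k) (v \in C).
Proof.
apply: (iffP mapP) => [[d /trajectP [k kn ->] ->]|[k kn ->]].
  by exists k.
by exists (o k) => //; apply/trajectP; exists k.
Qed.

Lemma c_in k : c k \in C.
Proof.
rewrite /c o_mod; apply/memC; exists (k %% n) => //.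
by rewrite ltn_mod; apply: leq_trans hn.
Qed.

Lemma memO d : reflect (exists k, d = o k) (d \in orbit ph d0).
Proof.
apply: (iffP trajectP) => [[k _ ->]|[k ->]]; first by exists k.
exists (k %% n); first by rewrite ltn_mod; apply: leq_trans hn.
by rewrite {1}o_mod.
Qed.

Lemma o_in k : o k \in orbit ph d0.
Proof. by apply/memO; exists k. Qed.

Lemma c_inj k l : c k = c l -> k = l %[mod n].
Proof.
have n0 : 0 < n by apply: leq_trans hn.
move=> e.
have : nth (tl d0) C (k %% n) == nth (tl d0) C (l %% n).
  by rewrite !nth_C ?ltn_mod // /c -!o_mod -/(c k) -/(c l) e.
by rewrite nth_uniq ?size_C ?ltn_mod // => /eqP.
Qed.

Lemma c_neq k j : 0 < j < n -> c k != c (k + j).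
Proof.
move=> /andP[j0 jn]; apply/eqP => /c_inj /eqP.
rewrite -{1}[k]addn0 eqn_modDl mod0n modn_small //.
by move/eqP => j0'; rewrite -j0' in j0.
Qed.

Lemma headO k : tl (a (o k)) = c k.+1.
Proof. by rewrite /c -o_S (tl_ph hpm). Qed.

Lemma tlao k : tl (a (o k)) = c k.+1.
Proof. exact: headO. Qed.

Lemma ao_neq k : a (o k) != o k.+1.
Proof.
apply/eqP => e; have h := c_neq k (j := 2).
have /h : 0 < 2 < n by rewrite (leq_trans _ hn).
rewrite addn2 => /eqP; apply.
by rewrite -headO -/(o k.+1) -e (aK hpm).
Qed.

Lemma ao_notin k : a (o k) \notin orbit ph d0.
Proof.
apply/negP => /memO [l e].
have : tl (a (o k)) = tl (o l) by rewrite e.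
rewrite headO => /c_inj el.
have := ao_neq k; rewrite e (o_mod l) -el -o_mod eqxx //.
Qed.

Lemma O_tl d k : d \in orbit ph d0 -> tl d = c k -> d = o k.
Proof.
move=> /memO [l ->] /c_inj e.
by rewrite (o_mod l) e -o_mod.
Qed.

Lemma three_le_card (T : finType) (A : {pred T}) x y z :
  x \in A -> y \in A -> z \in A -> x != y -> x != z -> y != z -> 3 <= #|A|.
Proof.
move=> xA yA zA xy xz yz.
have <- : #|[:: x; y; z]| = 3.
  by apply/card_uniqP; rewrite /= !inE !negb_or xy xz yz.
by apply: subset_leq_card; apply/subsetP => w; rewrite !inE => /or3P [] /eqP ->.
Qed.

Lemma two_le_card (T : finType) (A : {pred T}) x y :
  x \in A -> y \in A -> x != y -> 2 <= #|A|.
Proof.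
move=> xA yA xy.
have <- : #|[:: x; y]| = 2.
  by apply/card_uniqP; rewrite /= !inE xy.
by apply: subset_leq_card; apply/subsetP => w; rewrite !inE => /orP [] /eqP ->.
Qed.

Lemma deg_c k : 2 <= dg (c k.+1).
Proof.
rewrite degE; apply: (@two_le_card _ _ (o k.+1) (a (o k))).
- by rewrite inE.
- by rewrite inE headO.
- by rewrite eq_sym ao_neq.
Qed.

Lemma degC v : v \in C -> 2 <= dg v.
Proof.
case/memC => k _ ->; rewrite -c_add.
have -> : k + n = (k + n).-1.+1 by rewrite prednK // addn_gt0 (leq_trans _ hn) ?orbT.
exact: deg_c.
Qed.

Lemma deg2_darts k d : dg (c k.+1) = 2 -> tl d = c k.+1 ->
  d = o k.+1 \/ d = a (o k).
Proof.
move=> d2 td; case: (eqVneq d (o k.+1)) => [->|h1]; first by left.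
case: (eqVneq d (a (o k))) => [->|h2]; first by right.
have := @three_le_card _ [pred d | tl d == c k.+1] (o k.+1) (a (o k)) d.
rewrite -degE d2 /= !inE eqxx headO td eqxx => /(_ isT isT isT).
by rewrite eq_sym ao_neq eq_sym h1 eq_sym h2 => /(_ isT isT isT).
Qed.

Lemma s_o_deg2 k : dg (c k.+1) = 2 -> s (o k.+1) = a (o k).
Proof.
move=> d2; have := deg2_darts (d := s (o k.+1)) d2.
rewrite (tl_s hpm) => /(_ erefl) [e|//].
by have := fix_deg1 hpm e; rewrite -/(c k.+1) d2.
Qed.

Lemma ph_ao k : dg (c k.+1) = 2 -> ph (a (o k.+1)) = a (o k).
Proof. by move=> d2; rewrite /phi (aK hpm) s_o_deg2. Qed.


Lemma c_pred k : exists j, c k = c j.+1.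
Proof.
exists (k + n).-1; rewrite prednK ?c_add //.
by rewrite addn_gt0 (leq_trans _ hn) ?orbT.
Qed.

Lemma exists_high : connected_graph tl a -> differs_from_face tl a s d0 ->
  exists k, 2 < dg (c k).
Proof.
move=> hcon hdf.
case: (boolP [exists k : 'I_n, 2 < dg (c k)]) => [/existsP [k hk]|H].
  by exists k.
have all2 : forall v, v \in C -> dg v = 2.
  move=> v vC; have := degC vC; case/memC: vC => k kn ->.
  move: H; rewrite negb_exists => /forallP /(_ (Ordinal kn)) /=.
  by rewrite -leqNgt => h1 h2; apply/eqP; rewrite eqn_leq h1 h2.
have key : forall d, tl d \in C ->
    tl (a d) \in C /\ (d \in orbit ph d0 \/ a d \in orbit ph d0).
  move=> d dC; have d2 := all2 _ dC.
  case/memC: dC => k _ e; have [j ej] := c_pred k.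
  rewrite e ej in d2; rewrite ej in e.
  case: (deg2_darts d2 e) => ->.
  - by rewrite headO c_in o_in; split => //; left.
  - by rewrite (aK hpm) -/(c j) c_in o_in; split => //; right.
have clC : closed (adj tl a) (mem C).
  move=> x y /existsP [d /andP [/eqP <- /eqP <-]].
  apply/idP/idP => [/key [] //|yC].
  by have [] := key (a d) yC; rewrite (aK hpm).
have vC : forall v, v \in C.
  move=> v; rewrite (closed_connect clC (hcon v (c 0))); exact: c_in.
case: hdf => [[v]|[d [dO adO]]]; first by rewrite vC.
have [_ [H1|H1]] := key d (vC _); first by rewrite H1 in dO.
by rewrite H1 in adO.
Qed.

End Outer.


Lemma imp_neg (x y : bool) : (x -> ~~ y) -> x + y <= 1. Proof. by case: x; case: y => // /(_ isT). Qed.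
Lemma imp_le (x y : bool) : (x -> y) -> x <= y. Proof. by case: x; case: y => // /(_ isT). Qed.
Lemma and4_le (p q r t : bool) : ~~ [&& p, q, r & t] -> p + q + r + t <= 3.
Proof. by case: p; case: q; case: r; case: t. Qed.
Lemma orb_le (x y : bool) : x || y <= x + y. Proof. by case: x; case: y. Qed.
Lemma b_le1 (x : bool) : x <= 1. Proof. by case: x. Qed.

Lemma pat_nat (t0 t1 t2 t3 t4 q0 q1 q2 q3 q4 c0 c1 c2 c3 c4 : nat) :
  t0 <= 1 -> t1 <= 1 -> t2 <= 1 -> t3 <= 1 -> t4 <= 1 ->
  c0 <= 1 -> c1 <= 1 -> c2 <= 1 -> c3 <= 1 -> c4 <= 1 ->
  t0 + c0 <= 1 -> t1 + c1 <= 1 -> t2 + c2 <= 1 -> t3 + c3 <= 1 -> t4 + c4 <= 1 ->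
  q0 <= c4 -> q0 <= c0 -> q0 <= c1 ->
  q1 <= c0 -> q1 <= c1 -> q1 <= c2 ->
  q2 <= c1 -> q2 <= c2 -> q2 <= c3 ->
  q3 <= c2 -> q3 <= c3 -> q3 <= c4 ->
  q4 <= c3 -> q4 <= c4 -> q4 <= c0 ->
  t0 + t1 + t2 + t3 <= 3 -> t1 + t2 + t3 + t4 <= 3 -> t2 + t3 + t4 + t0 <= 3 ->
  t3 + t4 + t0 + t1 <= 3 -> t4 + t0 + t1 + t2 <= 3 ->
  q0 + q1 + q2 + q3 <= 3 -> q1 + q2 + q3 + q4 <= 3 -> q2 + q3 + q4 + q0 <= 3 ->
  q3 + q4 + q0 + q1 <= 3 -> q4 + q0 + q1 + q2 <= 3 ->
  t0 + q0 + t1 + q1 + t2 + q2 + t3 + q3 + t4 + q4 <= 3.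
Proof. intros; lia. Qed.

Lemma orsum (t0 t1 t2 t3 t4 q0 q1 q2 q3 q4 : bool) :
  (t0 || q0) + ((t1 || q1) + ((t2 || q2) + ((t3 || q3) + ((t4 || q4) + 0)))) <=
  t0 + q0 + t1 + q1 + t2 + q2 + t3 + q3 + t4 + q4.
Proof. by case: t0; case: t1; case: t2; case: t3; case: t4; case: q0; case: q1; case: q2; case: q3; case: q4. Qed.
Lemma pat_bool (t0 t1 t2 t3 t4 q0 q1 q2 q3 q4 c0 c1 c2 c3 c4 : bool) :
  t0 + c0 <= 1 -> t1 + c1 <= 1 -> t2 + c2 <= 1 -> t3 + c3 <= 1 -> t4 + c4 <= 1 ->
  q0 <= c4 -> q0 <= c0 -> q0 <= c1 ->
  q1 <= c0 -> q1 <= c1 -> q1 <= c2 ->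
  q2 <= c1 -> q2 <= c2 -> q2 <= c3 ->
  q3 <= c2 -> q3 <= c3 -> q3 <= c4 ->
  q4 <= c3 -> q4 <= c4 -> q4 <= c0 ->
  t0 + t1 + t2 + t3 <= 3 -> t1 + t2 + t3 + t4 <= 3 -> t2 + t3 + t4 + t0 <= 3 ->
  t3 + t4 + t0 + t1 <= 3 -> t4 + t0 + t1 + t2 <= 3 ->
  q0 + q1 + q2 + q3 <= 3 -> q1 + q2 + q3 + q4 <= 3 -> q2 + q3 + q4 + q0 <= 3 ->
  q3 + q4 + q0 + q1 <= 3 -> q4 + q0 + q1 + q2 <= 3 ->
  (t0 || q0) + ((t1 || q1) + ((t2 || q2) + ((t3 || q3) + ((t4 || q4) + 0)))) <= 3.
Proof.
move=> h1 h2 h3 h4 h5 h6 h7 h8 h9 h10 h11 h12 h13 h14 h15 h16 h17 h18 h19 h20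
  h21 h22 h23 h24 h25 h26 h27 h28 h29 h30.
apply: leq_trans (orsum _ _ _ _ _ _ _ _ _ _) _.
exact: (@pat_nat t0 t1 t2 t3 t4 q0 q1 q2 q3 q4 c0 c1 c2 c3 c4 (b_le1 _) (b_le1 _) (b_le1 _) (b_le1 _) (b_le1 _)
  (b_le1 _) (b_le1 _) (b_le1 _) (b_le1 _) (b_le1 _) h1 h2 h3 h4 h5 h6 h7 h8 h9 h10
  h11 h12 h13 h14 h15 h16 h17 h18 h19 h20 h21 h22 h23 h24 h25 h26 h27 h28 h29 h30).
Qed.

Lemma part_card (D J : finType) (p : D -> J) (Q : pred J) (P : pred D) :
  (forall d, Q (p d)) ->
  \sum_(j | Q j) #|[pred d | (p d == j) && P d]| = #|[pred d | P d]|.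
Proof.
move=> hQ; rewrite -sum1_card (partition_big p Q) //=.
apply: eq_bigr => j _; rewrite -sum1_card; apply: eq_bigl => d /=.
by rewrite andbC.
Qed.

Lemma traject_iota (T : Type) (f : T -> T) x m k :
  traject f (iter m f x) k = [seq iter i f x | i <- iota m k].
Proof.
elim: k m => [//|k IH] m /=; congr (_ :: _).
by rewrite -IH.
Qed.

Lemma card_filter_orbit (T : finType) (f : T -> T) (P : pred T) x :
  #|[pred d | fconnect f x d && P d]| = count P (orbit f x).
Proof.
rewrite -size_filter -(card_uniqP (filter_uniq _ (orbit_uniq f x))).
by apply: eq_card => d; rewrite !inE mem_filter fconnect_orbit andbC.
Qed.

Section Main.
Variables (V D : finType) (tl : D -> V) (a s : D -> D) (d0 : D).
Hypothesis hpm : plane_map tl a s.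
Hypothesis hcon : connected_graph tl a.
Hypothesis htf : triangle_free tl a.

Local Notation ph := (phi a s).
Local Notation dg := (deg tl).
Local Notation n := (order ph d0).
Local Notation C := (outer_walk tl a s d0).
Local Notation O := (orbit ph d0).

Hypothesis hn : 5 <= n <= 6.
Hypothesis huniq : uniq C.
Hypothesis hint : forall v, v \notin C -> 3 <= dg v.
Hypothesis hdf : differs_from_face tl a s d0.
Hypothesis notetra : ~ (exists v1 v2 v3 v4, tetragram tl a s v1 v2 v3 v4).
Hypothesis nopenta : ~ (exists v1 v2 v3 v4 v5, pentagram tl a s v1 v2 v3 v4 v5 /\
     [/\ v1 \notin C, v2 \notin C, v3 \notin C & v4 \notin C]).

Let hn3 : 3 <= n. Proof. by case/andP: hn => h _; apply: leq_trans h. Qed.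

Lemma hdeg v : 2 <= dg v.
Proof.
case: (boolP (v \in C)) => [vC|vC]; first exact: (degC hpm hn3 huniq vC).
by apply: leq_trans (hint vC).
Qed.

Definition tt d := (tl d \notin C) && (dg (tl d) == 3).
Definition qq d := [&& tl d \in C, d \notin O, dg (tl d) == 2 & dg (tl (a d)) == 2].
Definition hh d := tt d || qq d.

Lemma qq_pred d k : qq d -> tl d = c tl a s d0 k.+1 -> d = a (o a s d0 k).
Proof.
case/and4P => _ dO d2 _ e; rewrite e in d2.
case: (deg2_darts hpm hn3 huniq (eqP d2) e) => // ed.
by rewrite ed (o_in hpm hn3) in dO.
Qed.

Lemma qq_next d : qq d -> tl (ph d) \in C.
Proof.
move=> q; have := q; case/and4P => /memC [k _ e] _ _ _.
have [j ej] := c_pred hpm hn3 k; rewrite ej in e.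
by rewrite (qq_pred q e) (tl_ph hpm) (aK hpm) (c_in hpm hn3).
Qed.

Lemma qq_prev p : qq (ph p) -> tl p \in C.
Proof.
move=> q; have := q; case/and4P => /memC [k _ e] _ d2 _.
have [j ej] := c_pred hpm hn3 k; rewrite ej in e.
have e2 := qq_pred q e.
have d2' : dg (c tl a s d0 j.+1) = 2 by rewrite -e; apply/eqP.
have : ph p = ph (a (o a s d0 j.+1)) by rewrite (ph_ao hpm hn3 huniq d2') e2.
move/(ph_inj hpm) => ->; rewrite (headO d0 hpm); exact: (c_in hpm hn3).
Qed.


Local Notation cc := (c tl a s d0).
Local Notation oo := (o a s d0).

Lemma o_addq j q : oo (q * n + j) = oo j.
Proof. by rewrite (o_mod (tl:=tl) d0 hpm) modnMDl -(o_mod (tl:=tl) d0 hpm). Qed.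

Lemma c_mod k : cc k = cc (k %% n).
Proof. by rewrite /c (o_mod (tl:=tl) d0 hpm). Qed.

Lemma qq_chain d : iter 5 ph d = d -> qq d -> qq (ph d) -> qq (ph (ph d)) ->
  qq (ph (ph (ph d))) -> False.
Proof.
move=> h5 q0 q1 q2 q3.
have := q0; case/and4P => /memC [k _ e] _ dd dad.
have [j ej] := c_pred hpm hn3 k; rewrite ej in e.
have e0 := qq_pred q0 e.
pose L := (4 * n + j) - 4.
have eL : 4 * n + j = L.+4 by rewrite /L; case/andP: hn => h1 _; lia.
have {}e0 : d = a (oo L.+4) by rewrite -eL o_addq.
have degh x y : qq x -> x = a (oo y) -> dg (cc y) = 2.
  by move=> /and4P [_ _ _ /eqP h] ex; rewrite ex (aK hpm) in h.
have d4 : dg (cc L.+4) = 2 by apply: degh q0 e0.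
have e1 : ph d = a (oo L.+3) by rewrite e0 (ph_ao hpm hn3 huniq d4).
have d3 : dg (cc L.+3) = 2 by apply: degh q1 e1.
have e2 : ph (ph d) = a (oo L.+2) by rewrite e1 (ph_ao hpm hn3 huniq d3).
have d2 : dg (cc L.+2) = 2 by apply: degh q2 e2.
have e3 : ph (ph (ph d)) = a (oo L.+1) by rewrite e2 (ph_ao hpm hn3 huniq d2).
have d1 : dg (cc L.+1) = 2 by apply: degh q3 e3.
have e4 : ph (ph (ph (ph d))) = a (oo L) by rewrite e3 (ph_ao hpm hn3 huniq d1).
have d5 : dg (cc (L + 5)) = 2.
  have -> : L + 5 = L.+4.+1 by lia.
  by move: dd; rewrite e0 (headO d0 hpm) => /eqP.
have cL : cc L = cc (L + 5).
  have : tl (iter 5 ph d) = tl d by rewrite h5.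
  rewrite /= e4 (tl_ph hpm) (aK hpm) e0 (headO d0 hpm) => e5.
  have -> : L + 5 = L.+4.+1 by lia.
  exact: e5.
case/andP: hn; rewrite leq_eqVlt => /orP [/eqP n5 _|n6 n6'].
- have [k' hk'] := exists_high hpm hn3 huniq hcon hdf.
  pose i := ((k' + 4 * L + 4) %% 5).+1.
  have ci : cc k' = cc (L + i).
    rewrite c_mod [RHS]c_mod -n5; congr cc; rewrite /i; lia.
  have : i < 6 by rewrite /i ltnS ltn_mod.
  rewrite ci {ci} in hk'; move: hk'.
  have : 0 < i by [].
  case: i => [|[|[|[|[|[|i]]]]]] //= _; rewrite ?addn1 ?addn2 ?addn3 ?addn4.
  + by rewrite d1.
  + by rewrite d2.
  + by rewrite d3.
  + by rewrite d4.
  + by rewrite d5.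
- have : 0 < 5 < n by rewrite /=; lia.
  by move/(c_neq hpm hn3 huniq L)/eqP; apply.
Qed.


Lemma no4t z : order ph z = 5 ->
  ~~ [&& tt z, tt (ph z), tt (ph (ph z)) & tt (ph (ph (ph z)))].
Proof.
move=> o5; apply/negP => /and4P [/andP [n0 /eqP g0] /andP [n1 /eqP g1]
  /andP [n2 /eqP g2] /andP [n3 /eqP g3]].
apply: nopenta; exists (tl z), (tl (ph z)), (tl (ph (ph z))), (tl (ph (ph (ph z)))),
  (tl (ph (ph (ph (ph z))))).
by split; [split; [exact: (face5 hpm hdeg htf o5) | split] | split].
Qed.

Lemma no4q z : order ph z = 5 ->
  ~~ [&& qq z, qq (ph z), qq (ph (ph z)) & qq (ph (ph (ph z)))].
Proof.
move=> o5; apply/negP => /and4P [q0 q1 q2 q3].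
apply: (qq_chain _ q0 q1 q2 q3).
by rewrite -{2}(iter_ph_order hpm z) o5.
Qed.

Lemma tt_notC y : tt y -> ~~ (tl y \in C). Proof. by case/andP. Qed.
Lemma qq_C y : qq y -> tl y \in C. Proof. by case/and4P. Qed.

Lemma face_bound x : x \notin O -> 12 + count hh (orbit ph x) <= 3 * order ph x.
Proof.
move=> xO.
have := order_ge4 hpm hdeg htf x; rewrite leq_eqVlt => /orP [/eqP o4|].
  by case: notetra; do 4 eexists; apply: (face4 hpm hdeg htf (esym o4)).
rewrite leq_eqVlt => /orP [/eqP o5|o6]; last first.
  have := count_size hh (orbit ph x); rewrite size_orbit; lia.
rewrite /orbit -o5 /=.
have h5 : ph (ph (ph (ph (ph x)))) = x.
  by rewrite -{2}(iter_ph_order hpm x) -o5.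
have oj j : order ph (iter j ph x) = 5 by rewrite (order_iter hpm) o5.
have o0 := oj 0; have o1 := oj 1; have o2 := oj 2; have o3 := oj 3; have o4 := oj 4.
rewrite /= in o0 o1 o2 o3 o4.
have T0 := no4t o0; have T1 := no4t o1; have T2 := no4t o2; have T3 := no4t o3;
  have T4 := no4t o4.
have Q0 := no4q o0; have Q1 := no4q o1; have Q2 := no4q o2; have Q3 := no4q o3;
  have Q4 := no4q o4.
rewrite ?h5 in T0 T1 T2 T3 T4 Q0 Q1 Q2 Q3 Q4.
move/and4_le in T0; move/and4_le in T1; move/and4_le in T2; move/and4_le in T3;
  move/and4_le in T4.
move/and4_le in Q0; move/and4_le in Q1; move/and4_le in Q2; move/and4_le in Q3;
  move/and4_le in Q4.
pose y0 := x; pose y1 := ph x; pose y2 := ph (ph x); pose y3 := ph (ph (ph x));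
  pose y4 := ph (ph (ph (ph x))).
have tc y : tt y + (tl y \in C) <= 1 by apply: imp_neg; apply: tt_notC.
have qc y : qq y <= (tl y \in C) by apply: imp_le; apply: qq_C.
have qn y : qq y <= (tl (ph y) \in C) by apply: imp_le; apply: qq_next.
have qp y : qq (ph y) <= (tl y \in C) by apply: imp_le; apply: qq_prev.
have qp0 : qq x <= (tl y4 \in C) by rewrite -[in qq x]h5; apply: qp.
have qn4 : qq y4 <= (tl x \in C) by rewrite -[in tl x]h5; apply: qn.
have tc0 := tc y0; have tc1 := tc y1; have tc2 := tc y2; have tc3 := tc y3; have tc4 := tc y4.
have qc0 := qc y0; have qc1 := qc y1; have qc2 := qc y2; have qc3 := qc y3; have qc4 := qc y4.
have qn0 := qn y0; have qn1 := qn y1; have qn2 := qn y2; have qn3 := qn y3.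
have qp1 := qp y0; have qp2 := qp y1; have qp3 := qp y2; have qp4 := qp y3.
apply: (@leq_trans (12 + 3)); last by [].
rewrite leq_add2l /= /hh.
by apply: pat_bool.
Qed.


Definition hv v := #|[pred d | (tl d == v) && hh d]|.

Lemma hh_O d : d \in O -> hh d = false.
Proof.
case/(memO hpm hn3) => k ->; rewrite /hh /tt /qq (o_in hpm hn3) (c_in hpm hn3 k).
by rewrite andbF.
Qed.

Lemma vert_int v : v \notin C -> 12 <= 3 * dg v + hv v.
Proof.
move=> vC; have := hint vC; rewrite leq_eqVlt => /orP [/eqP d3|d4]; last lia.
have -> : hv v = dg v.
  rewrite degE /hv; apply: eq_card => d; rewrite !inE.
  case: (eqVneq (tl d) v) => //= e; by rewrite /hh /tt e vC -d3 eqxx.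
by rewrite -d3.
Qed.

Lemma vert_C i : 7 + 2 * minn 1 (dg (cc i.+1) - 2) <=
  3 * dg (cc i.+1) + hv (cc i.+1) + minn 1 (dg (cc i) - 2).
Proof.
have := deg_c hpm hn3 huniq i; rewrite leq_eqVlt => /orP [/eqP d2|d3]; last lia.
have := hdeg (cc i); rewrite leq_eqVlt => /orP [/eqP d2'|d3']; last lia.
suff : 0 < hv (cc i.+1) by lia.
apply/card_gt0P; exists (a (oo i)); rewrite !inE (headO d0 hpm) eqxx /=.
rewrite /hh /qq (headO d0 hpm) (c_in hpm hn3) (ao_notin hpm hn3 huniq) -d2 eqxx /=.
by rewrite (aK hpm) -/(cc i) -d2' eqxx orbT.
Qed.

Lemma C_iota : C = [seq cc i | i <- iota 0 n].
Proof.
by rewrite /outer_walk /face_walk -[d0 in traject _ d0]/(iter 0 ph d0) traject_iota -map_comp.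
Qed.

Lemma sumC (g : V -> nat) : \sum_(v | v \in C) g v = \sum_(i <- iota 0 n) g (cc i).
Proof. by rewrite -big_uniq // C_iota big_map. Qed.

Lemma vert_C_sum : 9 * n <= 11 + \sum_(v | v \in C) (3 * dg v + hv v).
Proof.
rewrite sumC.
have [k hk] := exists_high hpm hn3 huniq hcon hdf.
rewrite (c_mod k) in hk.
have km : k %% n < n by rewrite ltn_mod; apply: leq_trans hn3.
have e0 : cc n = cc 0 by rewrite -(c_add (tl:=tl) d0 hpm 0).
case/andP: hn; rewrite leq_eqVlt => /orP [/eqP n5 _|n6 n6'].
- rewrite -n5 /= !big_cons big_nil.
  have := vert_C 0; have := vert_C 1; have := vert_C 2; have := vert_C 3;
    have := vert_C 4;
  rewrite -n5 in km hk e0; rewrite e0.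
  move: (k %% 5) km hk => j; case: j => [|[|[|[|[|j]]]]] //= _ hk; lia.
- have n6e : n = 6 by lia.
  rewrite n6e /= !big_cons big_nil.
  have := vert_C 0; have := vert_C 1; have := vert_C 2; have := vert_C 3;
    have := vert_C 4; have := vert_C 5.
  rewrite n6e in km hk e0; rewrite e0.
  move: (k %% 6) km hk => j; case: j => [|[|[|[|[|[|j]]]]]] //= _ hk; lia.
Qed.


Lemma main_false : False.
Proof.
pose r0 := froot ph d0.
have hsym : connect_sym (frel ph) := fconnect_sym (ph_inj hpm).
have r0root : froots ph r0 by apply: roots_root.
have froot_eq r d : froots ph r -> (froot ph d == r) = fconnect ph r d.
  by move=> hr; rewrite -{1}(eqP hr) (root_connect hsym) hsym.
have E3 : \sum_(r | froots ph r) order ph r = #|D|.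
  transitivity (\sum_(r | froots ph r) #|[pred d | (froot ph d == r) && xpredT d]|).
    apply: eq_bigr => r hr; rewrite /order; apply: eq_card => d.
    by rewrite !inE andbT froot_eq.
  rewrite part_card; first by apply: eq_card.
  by move=> d; apply: roots_root.
have E4 : \sum_(r | froots ph r) count hh (orbit ph r) = #|[pred d | hh d]|.
  transitivity (\sum_(r | froots ph r) #|[pred d | (froot ph d == r) && hh d]|).
    apply: eq_bigr => r hr; rewrite -card_filter_orbit; apply: eq_card => d.
    by rewrite !inE froot_eq.
  by rewrite part_card //; move=> d; apply: roots_root.
have r0O r : froots ph r -> r != r0 -> r \notin O.
  move=> hr ne; apply/negP => rO; move: ne; rewrite -(eqP hr).
  rewrite -fconnect_orbit in rO.
  by rewrite /r0 (rootP hsym rO) eqxx.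
have ord0 : order ph r0 = n.
  have := connect_root (frel ph) d0; rewrite -/r0 => /iter_findex <-.
  exact: (order_iter hpm).
have cnt0 : count hh (orbit ph r0) = 0.
  apply/eqP; rewrite -leqn0 leqNgt -has_count; apply/hasPn => d dr0.
  rewrite hh_O //; rewrite -fconnect_orbit in dr0 *.
  rewrite -fconnect_orbit; exact: (connect_trans (connect_root (frel ph) d0) dr0).
rewrite (bigD1 r0) //= in E3; rewrite (bigD1 r0) //= in E4.
have Fineq : \sum_(r | froots ph r && (r != r0)) (12 + count hh (orbit ph r)) <=
             \sum_(r | froots ph r && (r != r0)) 3 * order ph r.
  apply: leq_sum => r /andP [hr ne]; apply: face_bound; exact: r0O.
rewrite big_split /= -big_distrr /= in Fineq.
have K : \sum_(r | froots ph r && (r != r0)) 12 =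
         12 * #|[pred r | froots ph r && (r != r0)]|.
  rewrite -sum1_card big_distrr /=; apply: eq_bigr => r _; by rewrite muln1.
have KF : #|[pred r | froots ph r]| = 1 + #|[pred r | froots ph r && (r != r0)]|.
  rewrite (cardD1 r0) inE r0root; congr (_ + _); apply: eq_card => r.
  by rewrite !inE andbC.
have EF : nfaces a s = #|[pred r | froots ph r]|.
  by rewrite /nfaces /n_comp_mem; apply: eq_card => r; rewrite !inE andbT.
have Eu := euler hpm; rewrite EF in Eu.
have E1 : \sum_v dg v = #|D|.
  transitivity (\sum_(v | xpredT v) #|[pred d | (tl d == v) && xpredT d]|).
    by apply: eq_bigr => v _; rewrite degE; apply: eq_card => d; rewrite !inE andbT.
  by rewrite part_card //; apply: eq_card.
have E2 : \sum_v hv v = #|[pred d | hh d]|.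
  by rewrite /hv part_card.
have Vs : \sum_v (3 * dg v + hv v) =
    \sum_(v | v \in C) (3 * dg v + hv v) + \sum_(v | v \notin C) (3 * dg v + hv v).
  by rewrite (bigID (mem C)).
rewrite big_split /= -big_distrr /= E1 E2 in Vs.
have VC := vert_C_sum.
have Vn : 12 * #|[pred v | v \notin C]| <= \sum_(v | v \notin C) (3 * dg v + hv v).
  rewrite -sum1_card big_distrr /=; apply: leq_sum => v vC; rewrite muln1.
  exact: vert_int.
have cC : #|[pred v | v \in C]| + #|[pred v | v \notin C]| = #|V|.
  by rewrite -(cardC (mem C)); congr (_ + _); apply: eq_card.
have cn : #|[pred v | v \in C]| = n.
  rewrite -(size_C tl a s d0) -(card_uniqP huniq); by apply: eq_card.
rewrite ord0 cnt0 in E3 E4.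
rewrite K in Fineq.
have A1 : 12 * #|[pred v | v \notin C]| + 9 * n <= 3 * #|D| + #|[pred d | hh d]| + 11.
  move: VC Vn Vs; clear; set X := \sum_(v in C) _; set Y := \sum_(v | v \notin C) _; set Z := #|[pred v | v \notin C]|. lia.
have A2 : 3 * n + 12 * #|[pred r | froots ph r & r != r0]| + #|[pred d | hh d]| <= 3 * #|D|.
  move: Fineq E3 E4; clear; set X := \sum_(i | froots ph i && (i != r0)) order ph i; set Y := \sum_(i | froots ph i && (i != r0)) count hh (orbit ph i); set W := #|[pred r | froots ph r & r != r0]|; set HH := #|[pred d | hh d]|; set N := order ph d0; set DD := #|D|; clearbody X Y W HH N DD; lia.
lia.
Qed.

End Main.


Theorem lemma2p1 (V D : finType) (tl : D -> V) (a s : D -> D) (d0 : D) :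
  plane_map tl a s ->
  connected_graph tl a ->
  triangle_free tl a ->
  3 <= size (outer_walk tl a s d0) <= 6 ->
  uniq (outer_walk tl a s d0) ->
  (forall v, v \notin outer_walk tl a s d0 -> 3 <= deg tl v) ->
  differs_from_face tl a s d0 ->
  (exists v1 v2 v3 v4, tetragram tl a s v1 v2 v3 v4) \/
  (exists v1 v2 v3 v4 v5, pentagram tl a s v1 v2 v3 v4 v5 /\
     [/\ v1 \notin outer_walk tl a s d0, v2 \notin outer_walk tl a s d0,
         v3 \notin outer_walk tl a s d0 & v4 \notin outer_walk tl a s d0]).
Proof.
move=> hpm hcon htf hsz huniq hint hdf.
case: (classic (exists v1 v2 v3 v4, tetragram tl a s v1 v2 v3 v4)) => [T|NT].
  by left.
case: (classic (exists v1 v2 v3 v4 v5, pentagram tl a s v1 v2 v3 v4 v5 /\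
     [/\ v1 \notin outer_walk tl a s d0, v2 \notin outer_walk tl a s d0,
         v3 \notin outer_walk tl a s d0 & v4 \notin outer_walk tl a s d0])) => [P|NP].
  by right.
exfalso.
rewrite size_C in hsz.
have hn3 : 3 <= order (phi a s) d0 by case/andP: hsz.
have hdeg : forall v, 2 <= deg tl v.
  move=> v; case: (boolP (v \in outer_walk tl a s d0)) => [vC|vC].
    exact: (degC hpm hn3 huniq vC).
  by apply: leq_trans (hint _ vC).
case/andP: hsz; rewrite leq_eqVlt => /orP [/eqP n3 _|n4 n6].
  apply: (htf (c tl a s d0 0) (c tl a s d0 1) (c tl a s d0 2)).
  - by rewrite -(headO d0 hpm 0); apply: adj_dart.
  - by rewrite -(headO d0 hpm 1); apply: adj_dart.
  - have -> : c tl a s d0 0 = c tl a s d0 3.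
      by rewrite -(c_add (tl:=tl) d0 hpm 0) -n3.
    by rewrite -(headO d0 hpm 2); apply: adj_dart.
move: n4; rewrite leq_eqVlt => /orP [/eqP n4|n5].
  apply: NT; do 4 eexists; apply: (face4 hpm hdeg htf (x := d0)); by rewrite n4.
have hn : 5 <= order (phi a s) d0 <= 6 by rewrite n5 n6.
exact: (main_false hpm hcon htf hn huniq hint hdf NT NP).
Qed.
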